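(* Consider the recursive multi-rooted algorithm $\mathrm{DST}(I,\widetilde{\mathrm{opt}})$ described in the context, applied to a planar \textsc{Multi-Rooted Directed Steiner Tree} instance $I=(G=(V,E),c,\{r_1,\dots,r_R\},X)$ with positive integer edge costs. Let $\ell$ and $o$ be non-negative integers with $|X|\le 2^{\ell}$ and $\widetilde{\mathrm{opt}}\le 2^{o}$. If $\widetilde{\mathrm{opt}}\ge\mathrm{opt}$, where $\mathrm{opt}$ is the optimal value of $I$, then $\mathrm{DST}(I,\widetilde{\mathrm{opt}})$ returns a feasible solution of cost at most $(8(R+\ell)+1)\cdot\mathrm{opt}$, and the number of recursive calls is at most $|X|\cdot 2^{2\ell+o}$.
   Context: MR-DST: digraph $G=(V,E)$ (parallel edges allowed, planar underlying undirected graph) with positive integer costs $c_e$, roots $r_1,\dots,r_R$, terminals $X\subseteq V\setminus\{r_1,\dots,r_R\}$; feasible $F\subseteq E$: every terminal reachable from some root via $F$; cost $\sum_{e\in F}c_e$; $\mathrm{opt}$ the minimum cost. $d(\{r_1,\dots,r_R\},v)=\min_j d(r_j,v)$ (shortest-path distances). $A_1,\dots,A_R$: vertex-disjoint shortest-path arborescences rooted at $r_1,\dots,r_R$ such that for $v\in V(A_i)$ the $r_i$–$v$ path in $A_i$ has cost $d(\{r_1,\dots,r_R\},v)$ (obtained from a shortest-path arborescence from an auxiliary vertex joined to all roots by zero-cost edges). A multi-rooted partial arborescence is $T=F\cup\bigcup_j T_{j}$ with $T_j$ vertex-disjoint partial arborescences (directed trees oriented away from their root) rooted at roots $r_j$,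 $F$ a set of edges not in any $T_j$ with endpoints in $\bigcup_j V(T_j)$, $T$ weakly connected and acyclic in the undirected sense. Induced subinstances for components $C_1,\dots,C_h$ of $G\setminus T$: contract $T$ into a new vertex $r_T$ (edges inherit costs), $I_{C_i}=(G_{\mathrm{contract}}[C_i\cup\{r_T\}],c,\{r_T\}\cup(\text{roots in }C_i),C_i\cap X)$. Algorithm $\mathrm{DST}(I,\widetilde{\mathrm{opt}})$: (1) if $\widetilde{\mathrm{opt}}<1$ or $d(\{r_1,\dots,r_R\},t)>\widetilde{\mathrm{opt}}$ for some $t\in X$, return infeasible; (2) else if $|X|=1$, return a shortest directed path from the root set to the terminal; (3) otherwise let $\mathcal F_1=\mathrm{DST}(I,\widetilde{\mathrm{opt}}/2)$ (cost $\infty$ if infeasible); remove all vertices $v$ with $d(\{r_1,\dots,r_R\},v)>\widetilde{\mathrm{opt}}$; compute a multi-rooted partial arborescence $T=F\cup\bigcup_{j=1}^R T_j$ in which each $T_j$ is empty or a subtree of $A_j$ rooted at $r_j$ that is the union of up to four shortest directed paths starting at $r_j$, and such that each weakly connected component $C_i$ of $G\setminus T$ contains at most $|X|/2$ terminals; let $\mathcal F'_i=\mathrm{DST}(I_{C_i},\widetilde{\mathrm{opt}})$ and $\mathcal F_2$ the edges of $G$ corresponding to $(E(T)\setminus F)\cup\bigcup_i\mathcal F'_i$ (cost $\infty$ if some $\mathcal F'_i$ is infeasible); return infeasible if both costs are $\infty$, else the cheaper of $\mathcal F_1,\mathcal F_2$. *)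

(* Defs.v *)
From HB Require Import structures.
From mathcomp Require Import all_boot all_order all_algebra.
From Stdlib Require Reals.

Set Implicit Arguments.
Unset Strict Implicit.
Unset Printing Implicit Defensive.

Import Order.TTheory GRing.Theory Num.Theory.
Local Open Scope ring_scope.

(* An instance of Multi-Rooted Directed Steiner Tree: a directed       *)
(* multigraph (parallel edges/loops allowed) given by an edge type     *)
Record inst : Type := Inst {
  iV : finType;
  iE : finType;
  isrc : iE -> iV;
  idst : iE -> iV;
  icost : iE -> nat;
  iroots : {set iV};
  iterms : {set iV} }.

Section Graph.
Variable I : inst.

Fixpoint walk (u v : iV I) (p : seq (iE I)) : bool :=
  match p with
  | [::] => u == v
  | e :: p' => (isrc e == u) && walk (idst e) v p'
  end.

Fixpoint uwalk (u v : iV I) (p : seq (iE I)) : bool :=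
  match p with
  | [::] => u == v
  | e :: p' => ((isrc e == u) && uwalk (idst e) v p')
               || ((idst e == u) && uwalk (isrc e) v p')
  end.

Definition wcost (p : seq (iE I)) : nat := (\sum_(e <- p) icost e)%N.
Definition setcost (S : {set iE I}) : nat := (\sum_(e in S) icost e)%N.

Definition dist_le (S : {set iV I}) (v : iV I) (q : rat) : Prop :=
  exists u p, [/\ u \in S, walk u v p & (wcost p)%:R <= q].

Definition is_dist (S : {set iV I}) (v : iV I) (d : nat) : Prop :=
  (exists u p, [/\ u \in S, walk u v p & wcost p = d]) /\
  (forall u p, u \in S -> walk u v p -> (d <= wcost p)%N).

Definition feasible (F : {set iE I}) : Prop :=
  forall t, t \in iterms I ->
    exists r p, [/\ r \in iroots I, walk r t p & all (fun e => e \in F) p].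

Definition is_opt (k : nat) : Prop :=
  (exists F, feasible F /\ setcost F = k) /\
  (forall F, feasible F -> (k <= setcost F)%N).

Definition endpoints (S : {set iE I}) : {set iV I} :=
  [set isrc e | e in S] :|: [set idst e | e in S].

Definition erel (ET : {set iE I}) : rel (iV I) := fun u v =>
  [exists e in ET, ((isrc e == u) && (idst e == v)) || ((isrc e == v) && (idst e == u))].

Definition wrel (W : {set iV I}) : rel (iV I) := fun u v =>
  [&& u \in W, v \in W &
   [exists e : iE I, ((isrc e == u) && (idst e == v)) || ((isrc e == v) && (idst e == u))]].

Definition comps (W : {set iV I}) : {set {set iV I}} :=
  [set [set v in W | connect (wrel W) u v] | u in W].

Definition arborescence (r : iV I) (S : {set iE I}) : Prop :=
  [/\ forall e, e \in S -> idst e != r,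
      forall v, v \in endpoints S -> v != r -> #|[set e in S | idst e == v]| = 1%N
    & forall v, v \in r |: endpoints S ->
        (exists p, walk r v p && all (fun e => e \in S) p)].

Definition avert (A : iV I -> {set iE I}) (r : iV I) : {set iV I} :=
  r |: endpoints (A r).

Definition spt_family (P : {set iV I}) (A : iV I -> {set iE I}) : Prop :=
  [/\ forall r, r \notin iroots I -> A r = set0,
      forall r e, e \in A r -> isrc e \in P /\ idst e \in P,
      (forall r r', r \in iroots I -> r' \in iroots I -> r != r' ->
        [disjoint avert A r & avert A r']) /\
      forall r, r \in iroots I -> arborescence r (A r),
      forall r v p, r \in iroots I -> walk r v p ->
        all (fun e => e \in A r) p -> is_dist (iroots I) v (wcost p)
    & forall v, v \in P -> exists2 r, r \in iroots I & v \in avert A r].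

(* T_j given as an option: None = empty, Some S = partial arborescence
   with edge set S and vertex set {r_j} U endpoints S. *)
Definition tvert (Tj : iV I -> option {set iE I}) : {set iV I} :=
  \bigcup_(r in iroots I) (if Tj r is Some ES then r |: endpoints ES else set0).

Definition tedges (Tj : iV I -> option {set iE I}) : {set iE I} :=
  \bigcup_(r in iroots I) odflt set0 (Tj r).

(* T = F U (U_j T_j) is a multi-rooted partial arborescence of the
   required form *)
Definition valid_T (A : iV I -> {set iE I}) (Tj : iV I -> option {set iE I})
    (F : {set iE I}) : Prop :=
  [/\ forall r, r \notin iroots I -> Tj r = None,
      forall r S, Tj r = Some S ->
        exists ps : seq (seq (iE I)),
          [/\ (size ps <= 4)%N,
              forall p, p \in ps ->
                (exists v, walk r v p && all (fun e => e \in A r) p)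
            & S = \bigcup_(p <- ps) [set e in p]],
      (forall r r' S S', r != r' -> Tj r = Some S -> Tj r' = Some S' ->
        [disjoint r |: endpoints S & r' |: endpoints S']) /\
      forall e, e \in F ->
        [/\ e \notin tedges Tj, isrc e \in tvert Tj & idst e \in tvert Tj],
      forall u v, u \in tvert Tj -> v \in tvert Tj ->
        connect (erel (tedges Tj :|: F)) u v
    &
      forall u p, uwalk u u p -> uniq p ->
        all (fun e => e \in tedges Tj :|: F) p -> p = [::]].

(* the cheaper of two (possibly infeasible = None = cost infinity)
   solutions; None if both are infeasible *)
Definition cheaper (a b r : option {set iE I}) : Prop :=
  match a, b with
  | None, None => r = None
  | Some _, None => r = a
  | None, Some _ => r = b
  | Some x, Some y => (r = a /\ (setcost x <= setcost y)%N)
                      \/ (r = b /\ (setcost y <= setcost x)%N)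
  end.

Definition fail_cond (q : rat) : Prop :=
  q < 1 \/ exists t, t \in iterms I /\ ~ dist_le (iroots I) t q.

End Graph.

(* Induced subinstance I_C: contract T (vertex set VT) into r_T and    *)
(* restrict to C U {r_T}.  Vertices: None = r_T, Some v = v in C.      *)
(* Edges: edges of G with both ends in C U VT and at least one in C    *)
(* (edges inside T become loops at r_T and are dropped).               *)
Definition keep (I : inst) (VT C : {set iV I}) (e : iE I) : bool :=
  [&& (isrc e \in C) || (idst e \in C), isrc e \in C :|: VT & idst e \in C :|: VT].

Definition subV (I : inst) (C : {set iV I}) : finType :=
  option {v : iV I | v \in C}.

Definition subE (I : inst) (VT C : {set iV I}) : finType :=
  {e : iE I | keep VT C e}.

Definition subinst (I : inst) (VT C : {set iV I}) : inst :=
  @Inst (subV C) (subE VT C)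
    (fun e => insub (isrc (val e)))
    (fun e => insub (idst (val e)))
    (fun e => icost (val e))
    [set x : subV C | if x is Some v then val v \in iroots I else true]
    [set x : subV C | if x is Some v then val v \in iterms I else false].

Definition lift_set (I : inst) (VT C : {set iV I})
    (S : {set iE (subinst VT C)}) : {set iE I} :=
  [set val (e : subE VT C) | e in S].

(* Executions of DST(I, opt~): DST_run I q res calls means that some   *)
(* execution of DST on (I, q) (over all admissible choices of shortest *)
(* paths, arborescences A_j and separator T) returns res (None =       *)
(* "infeasible") and makes calls calls in total (the call itself      *)
(* included, i.e. the number of nodes of its recursion tree).          *)
Definition relevant (I : inst) (W C : {set iV I}) : bool :=
  (C \in comps W) && (C :&: iterms I != set0).

Unset Implicit Arguments.
Inductive DST_run : forall I : inst, rat -> option {set iE I} -> nat -> Prop :=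
| DST_fail (I : inst) (q : rat) :
    fail_cond I q -> DST_run I q None 1
| DST_single (I : inst) (q : rat) (t r : iV I) (p : seq (iE I)) :
    ~ fail_cond I q ->
    iterms I = [set t] ->
    r \in iroots I -> walk r t p -> is_dist (iroots I) t (wcost p) ->
    DST_run I q (Some [set e in p]) 1
| DST_split (I : inst) (q : rat) (r1 : option {set iE I}) (n1 : nat)
    (P : {set iV I}) (A : iV I -> {set iE I})
    (Tj : iV I -> option {set iE I}) (F : {set iE I})
    (sol : forall C : {set iV I}, option {set iE (subinst (tvert Tj) C)})
    (cnt : {set iV I} -> nat) (res : option {set iE I}) :
    ~ fail_cond I q ->
    #|iterms I| != 1%N ->
    DST_run I (q / 2) r1 n1 ->
    (forall v, v \in P <-> dist_le (iroots I) v q) ->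
    spt_family P A ->
    valid_T A Tj F ->
    tvert Tj \subset P ->
    (forall C, C \in comps (P :\: tvert Tj) ->
       (2 * #|C :&: iterms I| <= #|iterms I|)%N) ->
    (forall C, relevant (P :\: tvert Tj) C ->
       DST_run (subinst (tvert Tj) C) q (sol C) (cnt C)) ->
    cheaper r1
      (if [forall C, relevant (P :\: tvert Tj) C ==> isSome (sol C)]
       then Some (tedges Tj :|:
                  \bigcup_(C | relevant (P :\: tvert Tj) C)
                     lift_set (odflt set0 (sol C)))
       else None)
      res ->
    DST_run I q res
      (1 + n1 + \sum_(C | relevant (P :\: tvert Tj) C) cnt C)%N.

Set Implicit Arguments.

(* Planarity of the underlying undirected multigraph: existence of a   *)
(* drawing in R^2 with distinct vertex points and edges drawn as arcs   *)
(* (Jordan arcs, or closed Jordan curves for loops) meeting only at     *)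
(* common endpoints.                                                    *)
Definition planar (I : inst) : Prop :=
  let R := Reals.Rdefinitions.R in
  let in01 (t : R) := Reals.Rdefinitions.Rle Reals.Rdefinitions.R0 t /\
                      Reals.Rdefinitions.Rle t Reals.Rdefinitions.R1 in
  let endpt (t : R) := t = Reals.Rdefinitions.R0 \/ t = Reals.Rdefinitions.R1 in
  exists (pos : iV I -> R * R) (arc : iE I -> R -> R * R),
    [/\ injective pos,
        forall e t, Reals.Ranalysis1.continuity_pt (fun s => fst (arc e s)) t /\
                    Reals.Ranalysis1.continuity_pt (fun s => snd (arc e s)) t,
        (forall e, arc e Reals.Rdefinitions.R0 = pos (isrc e) /\
                  arc e Reals.Rdefinitions.R1 = pos (idst e)) /\
        forall e s t, in01 s -> in01 t -> Reals.Rdefinitions.Rlt s t ->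
          arc e s = arc e t -> s = Reals.Rdefinitions.R0 /\ t = Reals.Rdefinitions.R1,
        forall e t v, in01 t -> arc e t = pos v -> endpt t
      & forall e e' s t, e != e' -> in01 s -> in01 t -> arc e s = arc e' t ->
          endpt s /\ endpt t].

(* Main.v *)
Require Import Defs.
From HB Require Import structures.
From mathcomp Require Import all_boot all_order all_algebra.
From mathcomp Require Import lra zify.
From Stdlib Require Import Classical.

Set Implicit Arguments.
Unset Strict Implicit.
Unset Printing Implicit Defensive.
Import Order.TTheory GRing.Theory Num.Theory.
Local Open Scope ring_scope.

Section Walks.
Variable I : inst.
Implicit Types (u v : iV I) (p : seq (iE I)).

Definition wlast u p := last u [seq idst e | e <- p].

Lemma walk_cat u v p1 p2 :
  walk u v (p1 ++ p2) = walk u (wlast u p1) p1 && walk (wlast u p1) v p2.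
Proof.
elim: p1 u => [|e p1 IH] u /=; first by rewrite eqxx.
by rewrite IH andbA.
Qed.

Lemma walk_end u v p : walk u v p -> wlast u p = v.
Proof. by elim: p u => [|e p IH] u /=; [move/eqP | case/andP => _ /IH]. Qed.

Lemma walk_rcons u v p e : walk u v p -> isrc e = v -> walk u (idst e) (rcons p e).
Proof. by move=> w s; rewrite -cats1 walk_cat (walk_end w) w /= s !eqxx. Qed.

Lemma walk_prefix u v p e : walk u v p -> e \in p ->
  exists p1, [/\ walk u (isrc e) p1, walk u (idst e) (rcons p1 e)
               & {subset rcons p1 e <= p}].
Proof.
move=> w Hin; case/splitPr: Hin w => p1 p2 w.
rewrite walk_cat in w; case/andP: w => w1 /= /andP[/eqP s _].
exists p1; split; first by rewrite s.
- by apply: walk_rcons w1 s.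
- move=> x; rewrite mem_rcons in_cons mem_cat in_cons.
  by case/orP=> ->; rewrite ?orbT.
Qed.

Lemma walk_uniq u v p (S : pred (iE I)) : walk u v p -> all S p ->
  exists p', [/\ walk u v p', all S p', uniq p' & {subset p' <= p}].
Proof.
elim: p u => [|e p IH] u /=.
  by move=> w _; exists [::].
case/andP=> /eqP s w /andP[Se aS].
have [p' [w' a' u' sub']] := IH _ w aS.
case Hin: (e \in p').
  move: Hin w' a' u' sub'; case/splitPr => p1 p2 w' a' u' sub'.
  exists (e :: p2); split.
  - rewrite /= s eqxx /=; move: w'; rewrite walk_cat => /andP[_ /= /andP[_ ->]] //.
  - by rewrite /= Se /=; move: a'; rewrite all_cat /= => /and3P[].
  - by move: u'; rewrite cat_uniq => /and3P[_ _].
  - move=> x; rewrite !in_cons; case/orP => [-> //| Hx].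
    by rewrite sub' ?orbT // mem_cat in_cons Hx !orbT.
exists (e :: p'); split.
- by rewrite /= s eqxx w'.
- by rewrite /= Se a'.
- by rewrite /= Hin u'.
- move=> x; rewrite !in_cons; case/orP => [-> //| Hx].
  by rewrite sub' ?orbT.
Qed.

Lemma walk_last_in u v p (S : pred (iE I)) : walk u v p -> all S p ->
  v = u \/ exists2 e, S e & idst e = v.
Proof.
elim: p u => [|e p IH] u /=; first by move/eqP => ->; left.
case/andP=> _ w /andP[Se aS].
case: (IH _ w aS) => [->|]; last by right.
by right; exists e.
Qed.

Lemma leq_setcost (A B : {set iE I}) : A \subset B -> (setcost A <= setcost B)%N.
Proof.
move=> sAB; rewrite /setcost; apply: (sub_le_big (le := leq)) => //.
all: try (by move=> *; apply: leq_addr).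
by move=> e; apply: (subsetP sAB).
Qed.

Lemma setcostU (A B : {set iE I}) : (setcost (A :|: B) <= setcost A + setcost B)%N.
Proof.
rewrite /setcost (big_setID A) /=; apply: leq_add; apply: leq_setcost.
- exact: subsetIr.
- by apply/subsetP => x; rewrite !inE; case: (x \in A) => //=; rewrite orbF andbT.
Qed.

Lemma setcost_seq p : (setcost [set e in p] <= wcost p)%N.
Proof.
elim: p => [|e p IH].
  by rewrite /setcost /wcost big_nil big_pred0 // => x; rewrite inE.
have -> : [set x in e :: p] = [set e] :|: [set x in p].
  by apply/setP => x; rewrite !inE.
apply: leq_trans (setcostU _ _) _.
by rewrite /wcost big_cons /setcost big_set1 leq_add2l.
Qed.

Lemma wcost_uniq p (F : {set iE I}) : uniq p -> all (fun e => e \in F) p ->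
  (wcost p <= setcost F)%N.
Proof.
move=> up ap; rewrite /wcost big_uniq //.
have -> : (\sum_(i in p) icost i = setcost [set e in p])%N.
  by apply: eq_bigl => x; rewrite inE.
apply: leq_setcost; apply/subsetP => x; rewrite inE => xp.
exact: (allP ap).
Qed.

Lemma setcost_big (J : Type) (r : seq J) (P : pred J) (S : J -> {set iE I}) :
  (setcost (\big[@setU _/set0]_(j <- r | P j) S j) <= \sum_(j <- r | P j) setcost (S j))%N.
Proof.
apply: (big_rec2 (fun X s => setcost X <= s)%N).
  by rewrite /setcost big_set0.
move=> j X s _ H; apply: leq_trans (setcostU _ _) _; exact: leq_add.
Qed.

End Walks.

Section Comps.
Variable I : inst.
Implicit Types (W C : {set iV I}).

Definition cls W (t : iV I) := [set v in W | connect (wrel W) t v].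

Lemma wrel_sym W : symmetric (wrel W).
Proof.
move=> u v; rewrite /wrel andbCA; congr (_ && (_ && _)).
by apply/existsP/existsP => [][e He]; exists e; rewrite orbC.
Qed.

Lemma comps_mem W C t : C \in comps W -> t \in C -> C = cls W t.
Proof.
case/imsetP => u uW ->; rewrite inE => /andP[tW ut].
apply/setP => v; rewrite !inE; apply: andb_id2l => vW.
apply/idP/idP => H.
- apply: (connect_trans _ H); by rewrite (sym_connect_sym (wrel_sym W)).
- exact: connect_trans ut H.
Qed.

Lemma cls_comps W t : t \in W -> cls W t \in comps W /\ t \in cls W t.
Proof. by move=> tW; split; [apply/imsetP; exists t | rewrite inE tW connect0]. Qed.

Lemma comps_sub W C : C \in comps W -> C \subset W.
Proof. by case/imsetP => u _ ->; apply/subsetP => v; rewrite inE => /andP[]. Qed.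

Lemma comps_closed W C a b : C \in comps W -> b \in C -> wrel W b a -> a \in C.
Proof.
move=> HC bC ba; rewrite (comps_mem HC bC) inE; apply/andP; split.
  by case/and3P: ba.
exact: connect1.
Qed.

Lemma comps_eq W C C' t : C \in comps W -> C' \in comps W -> t \in C -> t \in C' -> C = C'.
Proof. by move=> H H' tC tC'; rewrite (comps_mem H tC) (comps_mem H' tC'). Qed.

End Comps.

Lemma sum_disj (J T : finType) (P : pred J) (S : J -> {set T}) (X : {set T}) (w : T -> nat) :
  (forall j j' t, P j -> P j' -> t \in S j -> t \in S j' -> j = j') ->
  (\sum_(j | P j) \sum_(t in S j :&: X) w t <= \sum_(t in X) w t)%N.
Proof.
move=> Hd.
have E : forall j, (\sum_(t in S j :&: X) w t = \sum_(t in X) (if t \in S j then w t else 0))%N.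
  move=> j; rewrite -big_mkcondr; apply: eq_bigl => t; by rewrite in_setI andbC.
under eq_bigr do rewrite E.
rewrite exchange_big /=; apply: leq_sum => t tX.
rewrite -big_mkcondr /= sum_nat_const.
rewrite -{2}(mul1n (w t)) leq_mul2r; apply/orP; right.
apply/card_le1_eqP => j j'; rewrite ?inE /= => /andP[Pj tj] /andP[Pj' tj'].
exact: Hd Pj' Pj tj' tj.
Qed.

Section Sub.
Variables (I : inst) (VT C : {set iV I}).

Lemma insub_some (x : iV I) (v : {v | v \in C}) : insub x = Some v -> val v = x.
Proof. by case: insubP => [u _ <- [->]|]. Qed.

Lemma insub_none (x : iV I) : insub x = None :> option {v | v \in C} -> x \notin C.
Proof. by case: insubP => [u _ _ //|]. Qed.

Lemma insub_out (x : iV I) : x \notin C -> insub x = None :> option {v | v \in C}.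
Proof. by move=> H; case: insubP => // u uC; rewrite uC in H. Qed.

Lemma insub_in (x : iV I) (xC : x \in C) : insub x = Some (exist _ x xC).
Proof.
case: insubP => [u _ uE|/negP H]; last by case: (H xC).
by congr Some; apply: val_inj.
Qed.

Lemma card_sub_some (A : {set iV I}) :
  #|[set x : subV C | if x is Some v then val v \in A else false]| = #|C :&: A|.
Proof.
have -> : [set x : subV C | if x is Some v then val v \in A else false]
          = Some @: [set v : {v | v \in C} | val v \in A].
  apply/setP => [[v|]]; rewrite !inE.
  - apply/idP/imsetP => [vA | [v' v'B [->]]]; first by exists v; rewrite ?inE.
    by rewrite inE in v'B.
  - by apply/esym/imsetP => [[v _]].
rewrite card_imset; last by move=> x y [].
rewrite -(card_imset _ val_inj); apply: eq_card => y; rewrite !inE; apply/imsetP/andP => [[v] | [yC yA]].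
- by rewrite inE => vA ->; split => //; exact: valP.
- by exists (exist _ y yC); rewrite ?inE.
Qed.

Lemma card_sub_terms : #|iterms (subinst VT C)| = #|C :&: iterms I|.
Proof. exact: card_sub_some. Qed.

Lemma card_sub_roots : #|iroots (subinst VT C)| = (#|C :&: iroots I|).+1.
Proof.
have -> : iroots (subinst VT C) =
   None |: [set x : subV C | if x is Some v then val v \in iroots I else false].
  by apply/setP => [[v|]]; rewrite !inE.
by rewrite cardsU1 inE add1n card_sub_some.
Qed.

End Sub.

Section Sub2.
Variables (I : inst) (VT C : {set iV I}).

Lemma sub_walk_lift (reach : iV I -> Prop) (FS : {set iE I})
    (S : {set iE (subinst VT C)}) :
  (forall u, u \in VT -> reach u) ->
  (forall e, e \in FS -> reach (isrc e) -> reach (idst e)) ->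
  (forall e : subE VT C, e \in S -> val e \in FS) ->
  forall p x y, walk (I:=subinst VT C) x y p -> all (fun e => e \in S) p ->
    (if x is Some v then reach (val v) else True) ->
    (if y is Some w then reach (val w) else True).
Proof.
move=> Hvt Hstep HS; elim=> [|e p IH] x y /=; first by move/eqP => <-.
case/andP=> /eqP Hs w /andP[eS aS] Hx.
apply: (IH _ _ w aS).
have Rs : reach (isrc (val e)).
  move: Hs Hx; case E: (insub (isrc (val e))) => [v|] <-.
    by rewrite (insub_some E).
  move=> _; apply: Hvt; have := valP e; rewrite /keep => /and3P[_ H _].
  by move: H; rewrite inE (negbTE (insub_none E)).
have Rd := Hstep _ (HS _ eS) Rs.
case E: (insub (idst (val e))) => [v|] //.
by rewrite (insub_some E).
Qed.

Lemma sub_walk_proj (P : {set iV I}) (q : rat) (r : iV I) (F : {set iE I})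
    (tt : {v | v \in C}) :
  C \in comps (P :\: VT) ->
  (forall v, dist_le (iroots I) v q -> v \in P) ->
  r \in iroots I ->
  forall p a pre, walk r a pre -> walk a (val tt) p -> all (fun e => e \in F) p ->
   ((wcost pre + wcost p)%:R <= q) ->
   exists x, exists p'' : seq (subE VT C),
     [/\ walk (I:=subinst VT C) x (Some tt) p'',
         all (fun e : subE VT C => val e \in F) p''
       & x = None \/ exists2 v, x = Some v & val v = a].
Proof.
move=> HC HP rR; elim=> [|e p IH] a pre wpre /=.
  move=> /eqP -> _ _; exists (Some tt), [::]; split => //=; right; by exists tt.
case/andP=> /eqP se w /andP[eF aF] Hc.
have wpre' : walk r (idst e) (rcons pre e) by apply: walk_rcons wpre se.
have Hc' : ((wcost (rcons pre e) + wcost p)%:R <= q).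
  by move: Hc; rewrite /wcost -cats1 big_cat big_seq1 big_cons /= -addnA.
have [x [p'' [w'' a'' hx]]] := IH _ _ wpre' w aF Hc'.
case: hx => [xN | [v xv vE]].
  by exists x, p''; split => //; left.
have aP : a \in P.
  apply: HP; exists r, pre; split => //.
  apply: le_trans Hc; rewrite ler_nat; exact: leq_addr.
have dC : idst e \in C by rewrite -vE; exact: (valP v).
have CW := comps_sub HC.
have wD : walk (I:=subinst VT C) (insub (idst e)) (Some tt) p''.
  by rewrite -vE valK -xv.
case aV: (a \in VT).
- have aC : a \notin C.
    apply/negP => aC; have := subsetP CW _ aC; by rewrite !inE aV.
  have kp : keep VT C e by rewrite /keep !inE dC se aV !orbT.
  exists None, (exist _ e kp :: p''); split; last by left.
  + by rewrite /= se (insub_out aC) eqxx /=; exact: wD.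
  + by rewrite /= eF a''.
- have aW : a \in P :\: VT by rewrite !inE aV aP.
  have ra : wrel (P :\: VT) (idst e) a.
    rewrite /wrel aW (subsetP CW _ dC) /=; apply/existsP; exists e.
    by rewrite se !eqxx orbT.
  have aC := comps_closed HC dC ra.
  have kp : keep VT C e by rewrite /keep !inE dC se aC.
  exists (Some (exist _ a aC)), (exist _ e kp :: p''); split.
  + by rewrite /= se (insub_in aC) eqxx /=; exact: wD.
  + by rewrite /= eF a''.
  + by right; exists (exist _ a aC).
Qed.

End Sub2.

Lemma cheaper_cases I (a b r : option {set iE I}) : cheaper a b r -> r = a \/ r = b.
Proof.
case: a => [x|]; case: b => [y|] /=; try (by move=> ->; auto).
by case=> [[-> _]|[-> _]]; auto.
Qed.

Lemma cheaper_l I x b (r : option {set iE I}) :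
  cheaper (Some x) b r -> exists z, r = Some z /\ (setcost z <= setcost x)%N.
Proof.
case: b => [y|] /=; last by move=> ->; exists x.
by case=> [[-> _]|[-> H]]; [exists x | exists y].
Qed.

Lemma cheaper_r I a y (r : option {set iE I}) :
  cheaper a (Some y) r -> exists z, r = Some z /\ (setcost z <= setcost y)%N.
Proof.
case: a => [x|] /=; last by move=> ->; exists y.
by case=> [[-> H]|[-> _]]; [exists x | exists y].
Qed.

Lemma run_q_lt1 I q r c : DST_run I q r c -> q < 1 -> c = 1%N.
Proof.
case=> [I' q' _ _ //| I' q' t r' p Hf | I' q' r1 n1 P A Tj F sol cnt res Hf] *;
  exfalso; apply: Hf; left; assumption.
Qed.

Lemma opt_walk I F t : feasible F -> t \in iterms I ->
  exists r p, [/\ r \in iroots I, walk r t p, all (fun e => e \in F) p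
                & (wcost p <= setcost F)%N].
Proof.
move=> HF tX; have [r [p [rR w a]]] := HF t tX.
have [p' [w' a' u' _]] := walk_uniq w a.
by exists r, p'; split => //; exact: wcost_uniq u' a'.
Qed.

Lemma opt_pos I optv : (forall e : iE I, 0 < icost e)%N ->
  [disjoint iterms I & iroots I] ->
  iterms I != set0 -> is_opt I optv -> (0 < optv)%N.
Proof.
move=> Hc Hd Hn [[F [HF <-]] _].
have [t tX] := set0Pn _ Hn.
have [r [p [rR w a]]] := HF t tX.
case: p w a => [|e p] /=.
  move/eqP => rt; rewrite rt in rR; by rewrite (disjointFr Hd tX) in rR.
move=> _ /andP[eF _]; apply: leq_trans (Hc e) _.
apply: (@leq_trans (setcost [set e])); first by rewrite /setcost big_set1.
by apply: leq_setcost; rewrite sub1set.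
Qed.

Lemma not_fail I q optv : (forall e : iE I, 0 < icost e)%N ->
  [disjoint iterms I & iroots I] ->
  iterms I != set0 -> is_opt I optv -> optv%:R <= q -> ~ fail_cond I q.
Proof.
move=> Hc Hd Hn Ho Hq; have Hp := opt_pos Hc Hd Hn Ho.
case: Ho => [[F [HF Fc]] _]; case=> [q1 | [t [tX Hnd]]].
- have : (1 <= q) by apply: le_trans Hq; rewrite ler1n.
  by rewrite leNgt q1.
- apply: Hnd; have [r [p [rR w _ cp]]] := opt_walk HF tX.
  exists r, p; split => //; apply: le_trans Hq; by rewrite ler_nat -Fc.
Qed.

Lemma run_calls I q res c : DST_run I q res c -> forall l o,
  iterms I != set0 -> (#|iterms I| <= 2 ^ l)%N -> q <= (2 ^ o)%:R ->
  (c <= #|iterms I| * 2 ^ (2 * l + o))%N.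
Proof.
elim => {I q res c}.
- by move=> I q _ l o Hn _ _; rewrite muln_gt0 card_gt0 Hn expn_gt0.
- by move=> I q t r p _ _ _ _ _ l o Hn _ _; rewrite muln_gt0 card_gt0 Hn expn_gt0.
move=> I q r1 n1 P A Tj F sol cnt res Hnf Hn1 Hr1 IH1 HP Hspt HT HTP Hhalf _ IHs _
  l o Hn Hl Hq.
set n := #|iterms I|.
have n2 : (2 <= n)%N.
  by move: Hn1 Hn; rewrite -card_gt0 -/n; case: n => [|[|k]].
case: l Hl => [|l'] Hl; first by move: Hl; rewrite expn0 => /(leq_trans n2).
set B := (2 ^ (2 * l' + o))%N.
have M1 : (1 <= n * B)%N by rewrite muln_gt0 expn_gt0 andbT; apply: leq_trans n2.
have Hn1' : (n1 <= 2 * (n * B))%N.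
  case: o Hq @B M1 => [|o'] Hq B M1.
  - rewrite (run_q_lt1 Hr1); first by apply: leq_trans M1 _; rewrite leq_pmull.
    by move: Hq; rewrite expn0 => Hq; lra.
  - apply: leq_trans (IH1 l'.+1 o' Hn Hl _) _.
      by move: Hq; rewrite expnS natrM => Hq; lra.
    rewrite /B (_ : (2 * l'.+1 + o' = (2 * l' + o'.+1).+1)%N); last by lia.
    by rewrite expnS mulnCA.
have HS : (\sum_(C | relevant (P :\: tvert Tj) C) cnt C <= n * B)%N.
  apply: (@leq_trans (\sum_(C | relevant (P :\: tvert Tj) C)
                        \sum_(t in C :&: iterms I) B)).
    apply: leq_sum => C HC; rewrite sum_nat_const.
    have [HC1 HC2] := andP HC.
    rewrite -(card_sub_terms (tvert Tj)).
    apply: IHs => //.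
    + rewrite -card_gt0 card_sub_terms card_gt0 //.
    + rewrite card_sub_terms; rewrite -(@leq_pmul2l 2) //.
      apply: leq_trans (Hhalf _ HC1) _; apply: leq_trans Hl _.
      by rewrite expnS.
  rewrite -sum_nat_const.
  apply: (sum_disj (S := id)) => C C' t /andP[H1 _] /andP[H2 _] tC tC'.
  exact: comps_eq H1 H2 tC tC'.
rewrite (_ : (2 * l'.+1 + o = (2 * l' + o).+2)%N); last by lia.
rewrite !expnS -/B; nia.
Qed.

Lemma mem_bigcup_seq (T : finType) (J : eqType) (r : seq J) (F : J -> {set T}) x :
  x \in \big[@setU _/set0]_(j <- r) F j -> exists2 j, j \in r & x \in F j.
Proof.
elim: r => [|j r IH]; first by rewrite big_nil inE.
rewrite big_cons inE => /orP[xF | /IH [j' j'r xF]]; first by exists j; rewrite ?mem_head.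
by exists j'; rewrite // in_cons j'r orbT.
Qed.

Lemma bigcup_seq_sub (T : finType) (J : eqType) (r : seq J) (F : J -> {set T}) j x :
  j \in r -> x \in F j -> x \in \big[@setU _/set0]_(j <- r) F j.
Proof.
elim: r => [|j' r IH] //; rewrite in_cons big_cons inE => /orP[/eqP -> xF | jr xF].
  by rewrite xF.
by rewrite IH ?orbT.
Qed.

Lemma tvert_reach I (A : iV I -> {set iE I}) Tj F (FS : {set iE I}) u :
  valid_T A Tj F -> tedges Tj \subset FS -> u \in tvert Tj ->
  exists r p, [/\ r \in iroots I, walk r u p & all (fun e => e \in FS) p].
Proof.
case=> HN Hps _ _ _ sTF /bigcupP [r rR].
case E: (Tj r) => [ES|]; last by rewrite in_set0.
have sES : ES \subset FS.
  apply: subset_trans sTF; apply/subsetP => e eS; apply/bigcupP; exists r => //.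
  by rewrite E.
rewrite !inE => /orP[/eqP -> | uE]; first by exists r, [::]; split => //=.
have [ps [_ Hp ESe]] := Hps r ES E.
have Hin : forall e, e \in ES -> exists p, [/\ walk r (isrc e) p,
    walk r (idst e) (rcons p e) & all (fun e => e \in FS) (rcons p e)].
  move=> e; rewrite ESe => /mem_bigcup_seq [p pps]; rewrite inE => ep.
  have [v /andP [w _]] := Hp p pps.
  have [p1 [w1 w2 sub]] := walk_prefix w ep.
  exists p1; split => //; apply/allP => x /sub xp; apply: (subsetP sES).
  by rewrite ESe; apply: (bigcup_seq_sub pps); rewrite inE.
move: uE => /orP[] /imsetP [e eS ->]; have [p [w1 w2 a]] := Hin e eS.
- exists r, p; split => //; apply/allP => x xp; apply: (allP a); by rewrite mem_rcons in_cons xp orbT.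
- by exists r, (rcons p e).
Qed.

Lemma F2_feasible I q (P : {set iV I}) A Tj F
  (sol : forall C : {set iV I}, option {set iE (subinst (tvert Tj) C)}) :
  ~ fail_cond I q ->
  (forall v, v \in P <-> dist_le (iroots I) v q) ->
  valid_T A Tj F ->
  (forall C, relevant (P :\: tvert Tj) C -> forall S, sol C = Some S -> feasible S) ->
  [forall C, relevant (P :\: tvert Tj) C ==> isSome (sol C)] ->
  feasible (tedges Tj :|: \bigcup_(C | relevant (P :\: tvert Tj) C)
                                  lift_set (odflt set0 (sol C))).
Proof.
move=> Hnf HP HT Hsol /forallP Hall.
set FS := (tedges Tj :|: _).
pose reach u := exists r p, [/\ r \in iroots I, walk r u p & all (fun e => e \in FS) p].
have Rvt : forall u, u \in tvert Tj -> reach u.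
  move=> u uT; exact: (tvert_reach HT (subsetUl _ _) uT).
have Rstep : forall e, e \in FS -> reach (isrc e) -> reach (idst e).
  move=> e eF [r [p [rR w a]]]; exists r, (rcons p e); split => //.
  - exact: walk_rcons w _.
  - by rewrite all_rcons eF a.
move=> t tX.
have tP : t \in P.
  apply/HP; apply: NNPP => Hn; apply: Hnf; right; by exists t.
case tT: (t \in tvert Tj).
  have [r [p [rR w a]]] := Rvt t tT; by exists r, p.
have tW : t \in P :\: tvert Tj by rewrite !inE tT tP.
have [HC tC] := cls_comps tW.
move: (cls _ t) HC tC => C HC tC.
have Hrel : relevant (P :\: tvert Tj) C.
  rewrite /relevant HC /=; apply/set0Pn; exists t; by rewrite inE tC tX.
move: (Hall C); rewrite Hrel /=; case E: (sol C) => [S|] // _.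
have HS := Hsol C Hrel S E.
have tXs : (Some (exist _ t tC) : subV C) \in iterms (subinst (tvert Tj) C) by rewrite inE.
have [rho [p [rhoR w a]]] := HS _ tXs.
have HSF : forall e : subE (tvert Tj) C, e \in S -> val e \in FS.
  move=> e eS; rewrite inE; apply/orP; right; apply/bigcupP; exists C => //.
  by rewrite E; apply/imsetP; exists e.
have H := (sub_walk_lift (reach := reach) Rvt Rstep HSF).
move: rhoR w; rewrite inE; case: rho => [v|] /= vR w; apply: (H p _ _ w a) => //=.
by exists (val v), [::]; split => //=.
Qed.

Lemma run_feasible I q res c : DST_run I q res c -> forall S, res = Some S -> feasible S.
Proof.
elim => {I q res c}.
- by [].
- move=> I q t r p _ Ht rR w _ S [<-] t'; rewrite Ht inE => /eqP ->.
  exists r, p; split => //; apply/allP => e; by rewrite inE.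
move=> I q r1 n1 P A Tj F sol cnt res Hnf _ _ IH1 HP _ HT _ _ _ IHs Hch S Hres.
case: (cheaper_cases Hch) => Er; rewrite Er in Hres; first exact: IH1.
move: Hres; case: ifP => // Hall [<-].
apply: F2_feasible Hnf HP HT _ Hall => C HC S' ES'; exact: IHs C HC S' ES'.
Qed.

Lemma min_exists (Pr : nat -> Prop) n : Pr n ->
  exists m, [/\ Pr m, (m <= n)%N & forall k, Pr k -> (m <= k)%N].
Proof.
move: n; elim/ltn_ind => n IH Pn.
case: (classic (exists k, (k < n)%N /\ Pr k)) => [[k [kn Pk]] | Hno].
- have [m [Pm mk Hm]] := IH k kn Pk.
  by exists m; split => //; exact: leq_trans mk (ltnW kn).
- exists n; split => // k Pk; rewrite leqNgt; apply/negP => kn; apply: Hno.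
  by exists k.
Qed.

Lemma sub_feasible I (VT P : {set iV I}) (q : rat) (Fo : {set iE I}) C :
  feasible Fo -> (setcost Fo)%:R <= q ->
  (forall v, dist_le (iroots I) v q -> v \in P) ->
  C \in comps (P :\: VT) ->
  feasible (I:=subinst VT C) [set e : subE VT C | val e \in Fo].
Proof.
move=> HF Hq HP HC x; rewrite inE; case: x => [tt|] //= ttX.
have [r [p [rR w a cp]]] := opt_walk HF ttX.
have Hc : ((wcost (I:=I) [::] + wcost p)%:R <= q).
  by rewrite /wcost big_nil add0n; apply: le_trans Hq; rewrite ler_nat.
have [x [p'' [w'' a'' hx]]] :=
  sub_walk_proj (tt := tt) HC HP rR (a := r) (pre := [::]) (eqxx r) w a Hc.
exists x, p''; split => //.
- case: hx => [-> | [v -> vE]]; rewrite inE //=; by rewrite vE.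
- by apply/allP => e ep; rewrite inE; exact: (allP a'').
Qed.

Lemma setcost_FC I (VT C : {set iV I}) (Fo : {set iE I}) :
  setcost (I:=subinst VT C) [set e : subE VT C | val e \in Fo] =
  (\sum_(e in [set e | keep VT C e] :&: Fo) icost e)%N.
Proof.
rewrite /setcost /=.
rewrite -(big_imset _ (h := val)) /=; last by move=> x y _ _; exact: val_inj.
apply: eq_bigl => e; apply/imsetP/idP => [[x] | ].
- by rewrite inE => xF ->; rewrite !inE (valP x) xF.
- rewrite !inE => /andP[ke eF]; exists (exist _ e ke); by rewrite ?inE.
Qed.

Lemma setcost_lift I (VT C : {set iV I}) (S : {set iE (subinst VT C)}) :
  setcost (lift_set S) = setcost S.
Proof.
rewrite /setcost /lift_set /= big_imset //.
by move=> x y _ _; exact: val_inj.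
Qed.

Lemma keep_uniq I (VT P : {set iV I}) C C' e :
  C \in comps (P :\: VT) -> C' \in comps (P :\: VT) ->
  keep VT C e -> keep VT C' e -> C = C'.
Proof.
move=> HC HC' k k'.
have nVT : forall D x, D \in comps (P :\: VT) -> x \in D -> x \notin VT.
  by move=> D x HD xD; have := subsetP (comps_sub HD) _ xD; rewrite !inE => /andP[].
move: k k'; rewrite /keep !inE => /and3P[/orP[sC|dC] s1 d1] /and3P[/orP[sC'|dC'] s2 d2].
- exact: comps_eq HC HC' sC sC'.
- move: d1; rewrite (negbTE (nVT _ _ HC' dC')) orbF => dC.
  exact: comps_eq HC HC' dC dC'.
- move: s1; rewrite (negbTE (nVT _ _ HC' sC')) orbF => sC.
  exact: comps_eq HC HC' sC sC'.
- exact: comps_eq HC HC' dC dC'.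
Qed.

Lemma sum_seq_le (J : eqType) (r : seq J) (f : J -> nat) b :
  (forall j, j \in r -> f j <= b)%N -> (\sum_(j <- r) f j <= size r * b)%N.
Proof.
elim: r => [|j r IH] H; first by rewrite big_nil.
rewrite big_cons mulSn; apply: leq_add; first by apply: H; rewrite mem_head.
by apply: IH => j' Hj'; apply: H; rewrite in_cons Hj' orbT.
Qed.

Lemma tcost I q (optv : nat) (P : {set iV I}) A Tj F :
  (forall v, v \in P <-> dist_le (iroots I) v q) -> spt_family P A -> valid_T A Tj F ->
  q < 2 * optv%:R ->
  (setcost (tedges Tj) <= #|iroots I :&: tvert Tj| * (8 * optv))%N.
Proof.
move=> HP [_ HAP _ Hdist _] [HN Hps _ _ _] Hq.
have Hpath : forall r v p, r \in iroots I -> walk r v p -> all (fun e => e \in A r) p ->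
    (wcost p <= 2 * optv)%N.
  move=> r v p rR w a.
  have Hd := Hdist r v p rR w a.
  case: (walk_last_in w a) => [vr | [e eA ev]].
    have := Hd.2 r [::] rR; rewrite vr /= eqxx => /(_ isT).
    by rewrite /wcost big_nil leqn0 => /eqP ->.
  have vP : v \in P by rewrite -ev; case: (HAP r e eA).
  have [u [p0 [uR w0 c0]]] := (HP v).1 vP.
  have := Hd.2 u p0 uR w0 => le.
  apply: ltnW; rewrite -(ltr_nat rat) natrM.
  apply: le_lt_trans Hq; apply: le_trans c0; by rewrite ler_nat.
have Hroot : forall r, r \in iroots I ->
    (setcost (odflt set0 (Tj r)) <= (r \in tvert Tj) * (8 * optv))%N.
  move=> r rR; case E: (Tj r) => [S|] /=; last by rewrite /setcost big_set0.
  have -> : r \in tvert Tj.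
    by apply/bigcupP; exists r => //; rewrite E !inE eqxx.
  rewrite mul1n.
  have [ps [Hs Hp ->]] := Hps r S E.
  apply: leq_trans (setcost_big _ _ _) _.
  apply: (@leq_trans (\sum_(p <- ps) wcost p)).
    by apply: leq_sum => p _; exact: setcost_seq.
  apply: leq_trans (sum_seq_le (b := (2 * optv)%N) _) _.
    move=> p pps; have [v /andP[w a]] := Hp p pps; exact: Hpath rR w a.
  rewrite mulnA; apply: leq_mul => //; apply: (@leq_trans (4 * 2)) => //; by rewrite leq_mul2r Hs orbT.
apply: (@leq_trans (\sum_(r in iroots I) ((r \in tvert Tj) * (8 * optv)))%N).
  apply: leq_trans (setcost_big _ _ _) _; apply: leq_sum => r rR; exact: Hroot.
rewrite (eq_bigr (fun r => if r \in tvert Tj then 8 * optv else 0)%N); last first.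
  by move=> r _; case: (r \in tvert Tj); rewrite ?mul1n ?mul0n.
rewrite -big_mkcondr sum_nat_const leq_mul2r; apply/orP; right.
by apply: eq_leq; apply: eq_card => r; rewrite !inE.
Qed.

Lemma run_cost I q res c : DST_run I q res c -> forall l optv,
  (forall e : iE I, 0 < icost e)%N -> [disjoint iterms I & iroots I] ->
  iterms I != set0 -> (#|iterms I| <= 2 ^ l)%N -> is_opt I optv -> optv%:R <= q ->
  exists F, res = Some F /\ (setcost F <= (8 * (#|iroots I| + l) + 1) * optv)%N.
Proof.
elim => {I q res c}.
- move=> I q Hf l optv Hc Hd Hn _ Ho Hq; by case: (not_fail Hc Hd Hn Ho Hq).
- move=> I q t r p _ Ht rR w Hdist l optv Hc Hd Hn _ Ho Hq.
  exists [set e in p]; split => //.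
  apply: leq_trans (setcost_seq p) _.
  have [[Fo [HFo Fc]] _] := Ho.
  have tX : t \in iterms I by rewrite Ht inE.
  have [r' [p' [r'R w' _ cp]]] := opt_walk HFo tX.
  apply: leq_trans (Hdist.2 _ _ r'R w') _; apply: leq_trans cp _; rewrite Fc.
  by rewrite leq_pmull // addn1.
move=> I q r1 n1 P A Tj F sol cnt res Hnf Hn1 Hr1 IH1 HP Hspt HT HTP Hhalf Hsub IHs Hch
  l optv Hc Hd Hn Hl Ho Hq.
case: (boolP (q < 2 * optv%:R)) => Hq2; last first.
  have Hq' : optv%:R <= q / 2 by move: Hq2; rewrite -leNgt => H; lra.
  have [F1 [E1 C1]] := IH1 l optv Hc Hd Hn Hl Ho Hq'.
  rewrite E1 in Hch; have [z [-> Hz]] := cheaper_l Hch.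
  by exists z; split => //; exact: leq_trans Hz C1.
have [[Fo [HFo Fc]] _] := Ho.
have n2 : (2 <= #|iterms I|)%N.
  by move: Hn1 Hn; rewrite -card_gt0; case: #|iterms I| => [|[|k]].
case: l Hl => [|l'] Hl; first by move: Hl; rewrite expn0 => /(leq_trans n2).
have HPv : forall v, dist_le (iroots I) v q -> v \in P by move=> v /HP.
set W := P :\: tvert Tj.
set k := #|iroots I :&: tvert Tj|.
set R := #|iroots I|.
have kR : (k <= R)%N by apply: subset_leq_card; exact: subsetIl.
set K' := (8 * (R - k + l'.+1) + 1)%N.
have HFoq : (setcost Fo)%:R <= q by rewrite Fc.
have HCsub : forall C, relevant W C -> exists S, sol C = Some S /\
    (setcost S <= K' * setcost (I:=subinst (tvert Tj) C)
                     [set e : subE (tvert Tj) C | val e \in Fo])%N.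
  move=> C Hrel; have /andP[HC1 HC2] := Hrel.
  have HFC := sub_feasible HFo HFoq HPv HC1.
  set FC := [set e : subE (tvert Tj) C | val e \in Fo] in HFC *.
  have [m [Pm mle Hm]] := min_exists
    (Pr := fun m => exists F', feasible (I:=subinst (tvert Tj) C) F' /\ setcost F' = m)
    (ex_intro _ FC (conj HFC erefl)).
  have Hopt : is_opt (subinst (tvert Tj) C) m.
    by split => // F' HF'; apply: Hm; exists F'.
  have FCle : (setcost (I:=subinst (tvert Tj) C) FC <= setcost Fo)%N.
    rewrite /FC setcost_FC.
    exact: (leq_setcost (A := [set e | keep (tvert Tj) C e] :&: Fo) (subsetIr _ _)).
  have Hmq : m%:R <= q.
    apply: le_trans HFoq; rewrite ler_nat; exact: leq_trans mle FCle.
  have Hc' : forall e : iE (subinst (tvert Tj) C), (0 < icost e)%N by move=> e; exact: Hc.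
  have Hd' : [disjoint iterms (subinst (tvert Tj) C) & iroots (subinst (tvert Tj) C)].
    rewrite disjoint_subset; apply/subsetP => x; rewrite !inE.
    case: x => [v|] //= vX.
    by rewrite (disjointFr Hd vX).
  have Hn' : iterms (subinst (tvert Tj) C) != set0.
    by rewrite -card_gt0 card_sub_terms card_gt0.
  have Hl' : (#|iterms (subinst (tvert Tj) C)| <= 2 ^ l')%N.
    rewrite card_sub_terms -(@leq_pmul2l 2) //; apply: leq_trans (Hhalf _ HC1) _.
    by apply: leq_trans Hl _; rewrite expnS.
  have [S [ES CS]] := IHs C Hrel l' m Hc' Hd' Hn' Hl' Hopt Hmq.
  exists S; split => //; apply: leq_trans CS _.
  apply: leq_mul; last exact: mle.
  have : (#|C :&: iroots I| + k <= R)%N.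
    rewrite /k -cardsUI.
    have -> : (C :&: iroots I) :&: (iroots I :&: tvert Tj) = set0.
      apply/setP => x; rewrite !inE.
      case xC: (x \in C) => //=.
      have := subsetP (comps_sub HC1) _ xC; rewrite !inE => /andP[/negbTE -> _].
      by rewrite !andbF.
    rewrite cards0 addn0; apply: subset_leq_card; apply/subsetP => x.
    by rewrite !inE => /orP[/andP[_ ->] | /andP[-> _]].
  rewrite card_sub_roots /K'; lia.
have Hall : [forall C, relevant W C ==> isSome (sol C)].
  apply/forallP => C; apply/implyP => Hrel; by have [S [-> _]] := HCsub C Hrel.
rewrite Hall in Hch.
have [z [-> Hz]] := cheaper_r Hch.
exists z; split => //; apply: leq_trans Hz _.
apply: leq_trans (setcostU _ _) _.
have HT' := tcost HP Hspt HT Hq2.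
have HU : (setcost (\bigcup_(C | relevant W C) lift_set (odflt set0 (sol C)))
             <= K' * optv)%N.
  apply: leq_trans (setcost_big _ _ _) _.
  apply: (@leq_trans (\sum_(C | relevant W C) K' * setcost (I:=subinst (tvert Tj) C)
                       [set e : subE (tvert Tj) C | val e \in Fo])%N).
    apply: leq_sum => C Hrel; have [S [ES CS]] := HCsub C Hrel.
    by rewrite ES /= setcost_lift.
  rewrite -big_distrr /= leq_mul2l; apply/orP; right.
  rewrite -Fc.
  under eq_bigr do rewrite setcost_FC.
  apply: (sum_disj (S := fun C => [set e | keep (tvert Tj) C e]))
    => C C' e /andP[H1 _] /andP[H2 _].
  rewrite !inE; exact: keep_uniq H1 H2.
apply: leq_trans (leq_add HT' HU) _.
rewrite /K' mulnA -mulnDl; apply: leq_mul => //; lia.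
Qed.

Unset Implicit Arguments.

Theorem lemma6 (I : inst) (l o : nat) (q : rat) (optv : nat)
    (res : option {set iE I}) (calls : nat) :
  planar I ->
  (forall e : iE I, 0 < icost e)%N ->
  [disjoint iterms I & iroots I] ->
  iterms I != set0 ->
  (#|iterms I| <= 2 ^ l)%N ->
  q <= (2 ^ o)%:R ->
  is_opt I optv ->
  optv%:R <= q ->
  DST_run I q res calls ->
  exists F : {set iE I},
    [/\ res = Some F, feasible F,
        (setcost F <= (8 * (#|iroots I| + l) + 1) * optv)%N
      & (calls <= #|iterms I| * 2 ^ (2 * l + o))%N].
Proof.
move=> _ Hc Hd Hn Hl Ho' Ho Hq Hrun.
have [F [EF CF]] := run_cost Hrun Hc Hd Hn Hl Ho Hq.
exists F; split => //.
- exact: (run_feasible Hrun EF).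
- exact (run_calls Hrun Hn Hl Ho').
Qed.
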